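(* Let $H$ be a weak Hopf algebra, $\pi\colon H\to A$ a partial representation, $w\in H_s$ and $z\in H_t$. Then for all $h\in H$: (1) $\pi(w)\pi(h)=\pi(wh)$; (2) $\pi(h)\pi(z)=\pi(hz)$; (3) $\pi(z)\pi(h)=\pi(zh)$; (4) $\pi(h)\pi(w)=\pi(hw)$.
   Context: All algebras are associative and unital over a field $\Bbbk$; Sweedler notation $\Delta(h)=h_1\otimes h_2$, $\Delta(1_H)=1_1\otimes1_2$. A weak Hopf algebra is $(H,m,u,\Delta,\varepsilon,S)$ with $H$ an algebra, $(H,\Delta,\varepsilon)$ a coalgebra, and for all $g,h,k$: $\Delta(kh)=\Delta(k)\Delta(h)$; $\varepsilon(kh_1)\varepsilon(h_2g)=\varepsilon(khg)=\varepsilon(kh_2)\varepsilon(h_1g)$; $(1\otimes\Delta(1))(\Delta(1)\otimes1)=\Delta^2(1)=(\Delta(1)\otimes1)(1\otimes\Delta(1))$; $h_1S(h_2)=\varepsilon_t(h)$; $S(h_1)h_2=\varepsilon_s(h)$; $S(h)=S(h_1)h_2S(h_3)$, where $\varepsilon_t(h)=\varepsilon(1_1h)1_2$, $\varepsilon_s(h)=1_1\varepsilon(h1_2)$; $H_t=\varepsilon_t(H)$, $H_s=\varepsilon_s(H)$. A partial representation of $H$ in $A$ is a linear $\pi\colon H\to A$ with, for all $h,k$: (PR1) $\pi(1_H)=1_A$; (PR2) $\pi(h)\pi(k_1)\pi(S(k_2))=\pi(hk_1)\pi(S(k_2))$; (PR3) $\pi(h)\pi(S(k_1))\pi(k_2)=\pi(hS(k_1))\pi(k_2)$;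 (PR4) $\pi(h_1)\pi(S(h_2))\pi(k)=\pi(h_1)\pi(S(h_2)k)$; (PR5) $\pi(S(h_1))\pi(h_2)\pi(k)=\pi(S(h_1))\pi(h_2k)$; (PR6) $\pi(h)=\pi(h_1)\pi(S(h_2))\pi(h_3)$. *)

(* Defs.v *)
(* Weak Hopf algebras over a field, with the coproduct
   represented by a list of simple tensors and tensor equalities expressed
   through the universal property of the tensor product (all bi/trilinear maps). *)
From HB Require Import structures.
From mathcomp Require Import all_boot all_order all_algebra.
Set Implicit Arguments. Unset Strict Implicit. Unset Printing Implicit Defensive.
Import GRing.Theory.
Local Open Scope ring_scope.

Section WHA.
Variables (k : fieldType) (H : algType k).

Definition bilinear_map (M : lmodType k) (b : H -> H -> M) : Prop :=
  (forall x, linear (b x)) /\ (forall y, linear (fun x => b x y)).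
Definition trilinear_map (M : lmodType k) (t : H -> H -> H -> M) : Prop :=
  [/\ forall y z, linear (fun x => t x y z),
      forall x z, linear (fun y => t x y z) &
      forall x y, linear (t x y)].

(* Sweedler sums: a coproduct D : H -> seq (H * H) represents
   Delta(h) = \sum_(p <- D h) p.1 (x) p.2 *)
Definition sw2 (M : zmodType) (D : H -> seq (H * H)) (f : H -> H -> M) (h : H) : M :=
  \sum_(p <- D h) f p.1 p.2.
(* f(h_1, h_2, h_3) computed as (Delta (x) id) Delta(h) *)
Definition sw3 (M : zmodType) (D : H -> seq (H * H)) (f : H -> H -> H -> M) (h : H) : M :=
  \sum_(p <- D h) \sum_(q <- D p.1) f q.1 q.2 p.2.

Definition eps_t (D : H -> seq (H * H)) (eps : H -> k) (h : H) : H :=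
  sw2 D (fun a b => eps (a * h) *: b) 1.
Definition eps_s (D : H -> seq (H * H)) (eps : H -> k) (h : H) : H :=
  sw2 D (fun a b => eps (h * b) *: a) 1.

Record weak_hopf (D : H -> seq (H * H)) (eps : H -> k) (S : H -> H) : Prop := {
  wh_D_lin : forall (M : lmodType k) (b : H -> H -> M), bilinear_map b ->
     forall (c : k) (x y : H), sw2 D b (c *: x + y) = c *: sw2 D b x + sw2 D b y;
  wh_eps_lin : scalar eps;
  wh_S_lin : linear S;
  wh_coassoc : forall (M : lmodType k) (t : H -> H -> H -> M), trilinear_map t ->
     forall h, sw3 D t h = \sum_(p <- D h) \sum_(q <- D p.2) t p.1 q.1 q.2;
  wh_counit_l : forall h, sw2 D (fun a b => eps a *: b) h = h;
  wh_counit_r : forall h, sw2 D (fun a b => eps b *: a) h = h;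
  wh_D_mul : forall (M : lmodType k) (b : H -> H -> M), bilinear_map b ->
     forall x h : H,
       sw2 D b (x * h) = \sum_(p <- D x) \sum_(q <- D h) b (p.1 * q.1) (p.2 * q.2);
  wh_eps_1 : forall x h g : H,
       sw2 D (fun a b => eps (x * a) * eps (b * g)) h = eps (x * h * g);
  wh_eps_2 : forall x h g : H,
       sw2 D (fun a b => eps (x * b) * eps (a * g)) h = eps (x * h * g);
  wh_unit_1 : forall (M : lmodType k) (t : H -> H -> H -> M), trilinear_map t ->
       (* (1 (x) Delta 1)(Delta 1 (x) 1) = Delta^2 1 *)
       \sum_(p <- D 1) \sum_(q <- D 1) t p.1 (q.1 * p.2) q.2 = sw3 D t 1;
  wh_unit_2 : forall (M : lmodType k) (t : H -> H -> H -> M), trilinear_map t ->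
       (* (Delta 1 (x) 1)(1 (x) Delta 1) = Delta^2 1 *)
       \sum_(p <- D 1) \sum_(q <- D 1) t p.1 (p.2 * q.1) q.2 = sw3 D t 1;
  wh_S_t : forall h, sw2 D (fun a b => a * S b) h = eps_t D eps h;
  wh_S_s : forall h, sw2 D (fun a b => S a * b) h = eps_s D eps h;
  wh_S_S : forall h, S h = sw3 D (fun a b c => S a * b * S c) h
}.

Record partial_rep (D : H -> seq (H * H)) (S : H -> H)
    (A : algType k) (pi : H -> A) : Prop := {
  pr_lin : linear pi;
  pr1 : pi 1 = 1;
  pr2 : forall h x, sw2 D (fun a b => pi h * pi a * pi (S b)) x
                  = sw2 D (fun a b => pi (h * a) * pi (S b)) x;
  pr3 : forall h x, sw2 D (fun a b => pi h * pi (S a) * pi b) x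
                  = sw2 D (fun a b => pi (h * S a) * pi b) x;
  pr4 : forall h x, sw2 D (fun a b => pi a * pi (S b) * pi x) h
                  = sw2 D (fun a b => pi a * pi (S b * x)) h;
  pr5 : forall h x, sw2 D (fun a b => pi (S a) * pi b * pi x) h
                  = sw2 D (fun a b => pi (S a) * pi (b * x)) h;
  pr6 : forall h, pi h = sw3 D (fun a b c => pi a * pi (S b) * pi c) h
}.

End WHA.

(* Main.v *)
Require Import Defs.
From HB Require Import structures.
From mathcomp Require Import all_boot all_order all_algebra.
Set Implicit Arguments. Unset Strict Implicit. Unset Printing Implicit Defensive.
Import GRing.Theory.
Local Open Scope ring_scope.

Section Lin.
Variables (k : fieldType) (U V : lmodType k).

Lemma lin0 (f : U -> V) : linear f -> f 0 = 0.
Proof.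
move=> Hf; have h := Hf 1 0 0; rewrite !scale1r addr0 in h.
have : f 0 + f 0 = f 0 + 0 by rewrite addr0 -h.
by move/addrI.
Qed.

Lemma linD (f : U -> V) : linear f -> forall u v, f (u + v) = f u + f v.
Proof. by move=> Hf u v; have := Hf 1 u v; rewrite !scale1r. Qed.

Lemma linZ (f : U -> V) : linear f -> forall a u, f (a *: u) = a *: f u.
Proof. by move=> Hf a u; have := Hf a u 0; rewrite (lin0 Hf) !addr0. Qed.

Lemma linS (f : U -> V) : linear f -> forall I (s : seq I) (F : I -> U),
  f (\sum_(i <- s) F i) = \sum_(i <- s) f (F i).
Proof.
move=> Hf I s F; elim: s => [|x s IH]; first by rewrite !big_nil lin0.
by rewrite !big_cons linD // IH.
Qed.
End Lin.

Section WH.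
Variables (k : fieldType) (H : algType k) (D : H -> seq (H * H)) (eps : H -> k) (S : H -> H).
Hypothesis HW : weak_hopf D eps S.

Local Notation et := (eps_t D eps).
Local Notation es := (eps_s D eps).

Section Bil.
Variables (M : lmodType k) (b : H -> H -> M).
Hypothesis Hb : bilinear_map b.
Lemma b1D u v w : b (u + v) w = b u w + b v w.
Proof. by case: Hb => _ h; exact: (linD (h w)). Qed.
Lemma b1Z c u w : b (c *: u) w = c *: b u w.
Proof. by case: Hb => _ h; exact: (linZ (h w)). Qed.
Lemma b1S I (s : seq I) F w : b (\sum_(i <- s) F i) w = \sum_(i <- s) b (F i) w.
Proof. by case: Hb => _ h; exact: (linS (h w)). Qed.
Lemma b2D u v w : b w (u + v) = b w u + b w v.
Proof. by case: Hb => h _; exact: (linD (h w)). Qed.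
Lemma b2Z c u w : b w (c *: u) = c *: b w u.
Proof. by case: Hb => h _; exact: (linZ (h w)). Qed.
Lemma b2S I (s : seq I) F w : b w (\sum_(i <- s) F i) = \sum_(i <- s) b w (F i).
Proof. by case: Hb => h _; exact: (linS (h w)). Qed.
Lemma sw2lin : linear (sw2 D b).
Proof. by move=> c x y; apply: (wh_D_lin HW). Qed.
Lemma sw2D u v : sw2 D b (u + v) = sw2 D b u + sw2 D b v.
Proof. exact: (linD sw2lin). Qed.
Lemma sw2Z c u : sw2 D b (c *: u) = c *: sw2 D b u.
Proof. exact: (linZ sw2lin). Qed.
Lemma sw2S I (s : seq I) F : sw2 D b (\sum_(i <- s) F i) = \sum_(i <- s) sw2 D b (F i).
Proof. exact: (linS sw2lin). Qed.
End Bil.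

Lemma epsD u v : eps (u + v) = eps u + eps v.
Proof. by have := wh_eps_lin HW 1 u v; rewrite !scale1r mul1r. Qed.
Lemma eps0 : eps 0 = 0.
Proof.
have h := epsD 0 0; rewrite addr0 in h.
have : eps 0 + eps 0 = eps 0 + 0 by rewrite addr0 -h.
by move/addrI.
Qed.
Lemma epsZ c u : eps (c *: u) = c * eps u.
Proof. by have := wh_eps_lin HW c u 0; rewrite !addr0 eps0 addr0. Qed.

Lemma T3 (M : lmodType k) (b : H -> H -> M) : bilinear_map b ->
  sw2 D (fun a c => b a (et c)) 1 = sw2 D b 1.
Proof.
move=> Hb; rewrite /sw2.
transitivity (\sum_(p <- D 1) \sum_(q <- D 1)
   (fun a m c => eps m *: b a c) p.1 (q.1 * p.2) q.2).
  apply: eq_bigr => p _; rewrite /eps_t /sw2 (b2S Hb).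
  by apply: eq_bigr => q _; rewrite (b2Z Hb).
rewrite (wh_unit_1 HW (t := fun a m c => eps m *: b a c)); last first.
  split=> [y z c u v|x z c u v|x y c u v] /=.
  - by rewrite (b1D Hb) (b1Z Hb) scalerDr !scalerA mulrC.
  - by rewrite epsD epsZ scalerDl scalerA.
  - by rewrite (b2D Hb) (b2Z Hb) scalerDr !scalerA mulrC.
rewrite /sw3; apply: eq_bigr => p _ /=.
transitivity (b (sw2 D (fun a c => eps c *: a) p.1) p.2); last by rewrite (wh_counit_r HW).
by rewrite /sw2 (b1S Hb); apply: eq_bigr => q _; rewrite (b1Z Hb).
Qed.

Lemma T4 (M : lmodType k) (b : H -> H -> M) : bilinear_map b ->
  sw2 D (fun a c => b (es a) c) 1 = sw2 D b 1.
Proof.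
move=> Hb; rewrite /sw2.
transitivity (\sum_(q <- D 1) \sum_(p <- D 1)
   (fun a m c => eps m *: b a c) q.1 (p.1 * q.2) p.2).
  rewrite exchange_big; apply: eq_bigr => p _; rewrite /eps_s /sw2 (b1S Hb).
  by apply: eq_bigr => q _; rewrite (b1Z Hb).
rewrite (wh_unit_1 HW (t := fun a m c => eps m *: b a c)); last first.
  split=> [y z c u v|x z c u v|x y c u v] /=.
  - by rewrite (b1D Hb) (b1Z Hb) scalerDr !scalerA mulrC.
  - by rewrite epsD epsZ scalerDl scalerA.
  - by rewrite (b2D Hb) (b2Z Hb) scalerDr !scalerA mulrC.
rewrite /sw3; apply: eq_bigr => p _ /=.
transitivity (b (sw2 D (fun a c => eps c *: a) p.1) p.2); last by rewrite (wh_counit_r HW).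
by rewrite /sw2 (b1S Hb); apply: eq_bigr => q _; rewrite (b1Z Hb).
Qed.


Lemma etM y x : et y * x = \sum_(p <- D 1) eps (p.1 * y) *: (p.2 * x).
Proof. by rewrite /eps_t /sw2 mulr_suml; apply: eq_bigr => p _; rewrite scalerAl. Qed.
Lemma esM x y : y * es x = \sum_(p <- D 1) eps (x * p.2) *: (y * p.1).
Proof. by rewrite /eps_s /sw2 mulr_sumr; apply: eq_bigr => p _; rewrite scalerAr. Qed.

Lemma T1 (M : lmodType k) (b : H -> H -> M) : bilinear_map b -> forall y h,
  sw2 D b (et y * h) = sw2 D (fun a c => b (et y * a) c) h.
Proof.
move=> Hb y h.
pose t := fun a m c => eps (a * y) *: \sum_(r <- D h) b (m * r.1) (c * r.2).
have Ht : trilinear_map t.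
  split=> [m z c u v|x z c u v|x m c u v]; rewrite /t.
  - by rewrite mulrDl -scalerAl epsD epsZ scalerDl scalerA.
  - under eq_bigr => r _ do rewrite mulrDl -scalerAl (b1D Hb) (b1Z Hb).
    by rewrite big_split /= -scaler_sumr scalerDr !scalerA mulrC.
  - under eq_bigr => r _ do rewrite mulrDl -scalerAl (b2D Hb) (b2Z Hb).
    by rewrite big_split /= -scaler_sumr scalerDr !scalerA mulrC.
transitivity (\sum_(p <- D 1) \sum_(q <- D p.2) t p.1 q.1 q.2).
  rewrite etM (sw2S Hb); apply: eq_bigr => p _.
  by rewrite (sw2Z Hb) (wh_D_mul HW Hb) /t scaler_sumr.
rewrite -(wh_coassoc HW Ht) -(wh_unit_2 HW Ht) /sw2.
symmetry.
transitivity (\sum_(p <- D 1) eps (p.1 * y) *: sw2 D (fun u v => b (p.2 * u) v) (1 * h)).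
  under eq_bigr => r _ do rewrite etM (b1S Hb).
  rewrite exchange_big mul1r /sw2; apply: eq_bigr => p _.
  by rewrite scaler_sumr; apply: eq_bigr => r _; rewrite (b1Z Hb).
apply: eq_bigr => p _.
have Hb' : bilinear_map (fun u v => b (p.2 * u) v).
  by split=> [x|x] c u v /=; rewrite ?mulrDr ?(=^~ scalerAr) ?(b1D Hb) ?(b1Z Hb) ?(b2D Hb) ?(b2Z Hb).
rewrite (wh_D_mul HW Hb') /t scaler_sumr; apply: eq_bigr => q _.
by congr (_ *: _); apply: eq_bigr => r _; rewrite mulrA.
Qed.


Lemma T2 (M : lmodType k) (b : H -> H -> M) : bilinear_map b -> forall x h,
  sw2 D b (h * es x) = sw2 D (fun a c => b a (c * es x)) h.
Proof.
move=> Hb x h.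
pose t := fun a m c => eps (x * c) *: \sum_(r <- D h) b (r.1 * a) (r.2 * m).
have Ht : trilinear_map t.
  split=> [m z c u v|x' z c u v|x' m c u v]; rewrite /t.
  - under eq_bigr => r _ do rewrite mulrDr -scalerAr (b1D Hb) (b1Z Hb).
    by rewrite big_split /= -scaler_sumr scalerDr !scalerA mulrC.
  - under eq_bigr => r _ do rewrite mulrDr -scalerAr (b2D Hb) (b2Z Hb).
    by rewrite big_split /= -scaler_sumr scalerDr !scalerA mulrC.
  - by rewrite mulrDr -scalerAr epsD epsZ scalerDl scalerA.
transitivity (\sum_(p <- D 1) \sum_(q <- D p.1) t q.1 q.2 p.2).
  rewrite esM (sw2S Hb); apply: eq_bigr => p _.
  by rewrite (sw2Z Hb) (wh_D_mul HW Hb) /t exchange_big scaler_sumr.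
rewrite [RHS](_ : _ = sw3 D t 1) // -(wh_unit_2 HW Ht) /sw2 exchange_big /=.
transitivity (\sum_(q <- D 1) eps (x * q.2) *: sw2 D (fun u v => b u (v * q.1)) (h * 1)).
  under eq_bigr => r _ do rewrite esM (b2S Hb).
  rewrite exchange_big mulr1 /sw2; apply: eq_bigr => p _.
  by rewrite scaler_sumr; apply: eq_bigr => r _; rewrite (b2Z Hb).
apply: eq_bigr => q _.
have Hb' : bilinear_map (fun u v => b u (v * q.1)).
  by split=> [x'|x'] c u v /=; rewrite ?mulrDl -?scalerAl ?(b1D Hb) ?(b1Z Hb) ?(b2D Hb) ?(b2Z Hb).
rewrite (wh_D_mul HW Hb') /t exchange_big scaler_sumr; apply: eq_bigr => p _.
by congr (_ *: _); apply: eq_bigr => r _; rewrite mulrA.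
Qed.


Lemma SD u v : S (u + v) = S u + S v.
Proof. exact: (linD (wh_S_lin HW)). Qed.
Lemma SZ c u : S (c *: u) = c *: S u.
Proof. exact: (linZ (wh_S_lin HW)). Qed.

Lemma et_lin : linear et.
Proof.
move=> c u v; rewrite /eps_t /sw2.
under eq_bigr => p _ do rewrite mulrDr -scalerAr epsD epsZ scalerDl -scalerA.
by rewrite big_split /= scaler_sumr.
Qed.
Lemma es_lin : linear es.
Proof.
move=> c u v; rewrite /eps_s /sw2.
under eq_bigr => p _ do rewrite mulrDl -scalerAl epsD epsZ scalerDl -scalerA.
by rewrite big_split /= scaler_sumr.
Qed.
Lemma etD u v : et (u + v) = et u + et v. Proof. exact: (linD et_lin). Qed.
Lemma etZ c u : et (c *: u) = c *: et u. Proof. exact: (linZ et_lin). Qed.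
Lemma esD u v : es (u + v) = es u + es v. Proof. exact: (linD es_lin). Qed.
Lemma esZ c u : es (c *: u) = c *: es u. Proof. exact: (linZ es_lin). Qed.

Lemma et1 : et 1 = 1.
Proof.
rewrite /eps_t -[RHS](wh_counit_l HW 1); apply: eq_bigr => p _; by rewrite mulr1.
Qed.
Lemma es1 : es 1 = 1.
Proof.
rewrite /eps_s -[RHS](wh_counit_r HW 1); apply: eq_bigr => p _; by rewrite mul1r.
Qed.

Ltac bil := split=> [?|?] ? ? ? /=;
  rewrite ?(mulrDr, mulrDl, SD, SZ, etD, etZ, esD, esZ, =^~ scalerAl, =^~ scalerAr).

Lemma SE1 y : S (et y) = es (et y).
Proof.
have tri : trilinear_map (fun a b c => S a * b * S c).
  split=> ? ? ? ? ? /=; by rewrite ?(mulrDr, mulrDl, SD, SZ, =^~ scalerAl, =^~ scalerAr).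
rewrite (wh_S_S HW) (wh_coassoc HW tri).
transitivity (sw2 D (fun a c => S a * et c) (et y * 1)).
  rewrite mulr1 /sw2; apply: eq_bigr => p _.
  by rewrite -(wh_S_t HW) /sw2 mulr_sumr; apply: eq_bigr => q _; rewrite mulrA.
rewrite T1; last by bil.
rewrite (T3 (b := fun a c => S (et y * a) * c)); last by bil.
transitivity (sw2 D (fun a c => S a * c) (et y * 1)).
  by rewrite (T1 (b := fun a c => S a * c)) //; bil.
by rewrite mulr1 -(wh_S_s HW).
Qed.

Lemma SE2 x : S (es x) = et (es x).
Proof.
have tri : trilinear_map (fun a b c => S a * b * S c).
  by split=> ? ? ? ? ? /=; rewrite ?(mulrDr, mulrDl, SD, SZ, =^~ scalerAl, =^~ scalerAr).
rewrite (wh_S_S HW).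
transitivity (sw2 D (fun a c => es a * S c) (1 * es x)).
  rewrite mul1r /sw3 /sw2; apply: eq_bigr => p _.
  by rewrite -(wh_S_s HW) /sw2 mulr_suml.
rewrite T2; last by bil.
rewrite (T4 (b := fun a c => a * S (c * es x))); last by bil.
transitivity (sw2 D (fun a c => a * S c) (1 * es x)).
  by rewrite (T2 (b := fun a c => a * S c)) //; bil.
by rewrite mul1r -(wh_S_t HW).
Qed.


Section PR.
Variables (A : algType k) (pi : H -> A).
Hypothesis Hpi : partial_rep D S pi.

Lemma piD u v : pi (u + v) = pi u + pi v.
Proof. exact: (linD (pr_lin Hpi)). Qed.
Lemma piZ c u : pi (c *: u) = c *: pi u.
Proof. exact: (linZ (pr_lin Hpi)). Qed.
Lemma piS I (s : seq I) F : pi (\sum_(i <- s) F i) = \sum_(i <- s) pi (F i).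
Proof. exact: (linS (pr_lin Hpi)). Qed.

Ltac bl := split=> [?|?] ? ? ? /=;
  by rewrite ?(mulrDr, mulrDl, SD, SZ, etD, etZ, esD, esZ, piD, piZ, =^~ scalerAl, =^~ scalerAr).

Let f := fun a b c => pi a * pi (S b) * pi c.
Lemma trif : trilinear_map f.
Proof.
rewrite /f; split=> ? ? ? ? ? /=;
  by rewrite ?(mulrDr, mulrDl, SD, SZ, piD, piZ, =^~ scalerAl, =^~ scalerAr).
Qed.

Lemma P3 y h : pi (et y) * pi h = pi (et y * h).
Proof.
rewrite (pr6 Hpi h) (pr6 Hpi (et y * h)) -/f /sw3 mulr_sumr.
transitivity (\sum_(p <- D h) sw2 D (fun a b => pi (et y * a) * pi (S b)) p.1 * pi p.2).
  apply: eq_bigr => p _; rewrite -(pr2 Hpi) /sw2 mulr_suml mulr_sumr.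
  by apply: eq_bigr => q _; rewrite /f !mulrA.
transitivity (sw2 D (fun u v => sw2 D (fun a b => f a b v) u) (et y * h)); last by [].
rewrite T1; last first.
  split=> [x|v] c u w /=.
    rewrite /sw2 /f; under eq_bigr => q _ do rewrite piD piZ mulrDr -scalerAr.
    by rewrite big_split /= scaler_sumr.
  apply: (wh_D_lin HW); rewrite /f; bl.
rewrite /sw2; apply: eq_bigr => p _.
symmetry; transitivity (sw2 D (fun a b => f a b p.2) (et y * p.1)); first by [].
rewrite (T1 (b := fun a b => f a b p.2)); last by rewrite /f; bl.
by rewrite /sw2 mulr_suml.
Qed.


Lemma P4 x h : pi h * pi (es x) = pi (h * es x).
Proof.
rewrite (pr6 Hpi h) (pr6 Hpi (h * es x)) -/f !(wh_coassoc HW trif) mulr_suml.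
transitivity (\sum_(p <- D h) pi p.1 * sw2 D (fun a b => pi (S a) * pi (b * es x)) p.2).
  apply: eq_bigr => p _; rewrite -(pr5 Hpi) /sw2 mulr_suml mulr_sumr.
  by apply: eq_bigr => q _; rewrite /f !mulrA.
pose B := fun u v => pi u * sw2 D (fun a b => pi (S a) * pi b) v.
have HB : bilinear_map B.
  rewrite /B; split=> [x'|v] c u w /=.
    rewrite (sw2D (M := A) (b := fun a b => pi (S a) * pi b)); last by bl.
    rewrite (sw2Z (M := A) (b := fun a b => pi (S a) * pi b)); last by bl.
    by rewrite mulrDr -scalerAr.
  by rewrite piD piZ mulrDl -scalerAl.
transitivity (sw2 D B (h * es x)); last first.
  rewrite /sw2 /B; apply: eq_bigr => p _; rewrite /sw2 mulr_sumr.
  by apply: eq_bigr => q _; rewrite /f mulrA.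
rewrite T2 //; apply: eq_bigr => p _; rewrite /B.
rewrite (T2 (b := fun a b => pi (S a) * pi b)) //; bl.
Qed.

Lemma Fp m : sw2 D (fun a c => pi (m * a) * pi (S c)) 1 = pi m.
Proof.
rewrite -(T3 (b := fun a c => pi (m * a) * pi (S c))); last by bl.
transitivity (sw2 D (fun a c => pi (m * a * S (et c))) 1).
  by rewrite /sw2; apply: eq_bigr => p _; rewrite SE1 P4 -SE1.
rewrite (T3 (b := fun a c => pi (m * a * S c))); last by bl.
rewrite /sw2 -piS.
under eq_bigr => p _ do rewrite -mulrA.
by rewrite -mulr_sumr -[X in pi (m * X)]/(sw2 D (fun a c => a * S c) 1)
  (wh_S_t HW) et1 mulr1.
Qed.

Lemma Fm m : sw2 D (fun a c => pi (S a) * pi (c * m)) 1 = pi m.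
Proof.
rewrite -(T4 (b := fun a c => pi (S a) * pi (c * m))); last by bl.
transitivity (sw2 D (fun a c => pi (S (es a) * (c * m))) 1).
  by rewrite /sw2; apply: eq_bigr => p _; rewrite SE2 P3 -SE2.
rewrite (T4 (b := fun a c => pi (S a * (c * m)))); last by bl.
rewrite /sw2 -piS.
under eq_bigr => p _ do rewrite mulrA.
by rewrite -mulr_suml -[X in pi (X * m)]/(sw2 D (fun a c => S a * c) 1)
  (wh_S_s HW) es1 mul1r.
Qed.


Lemma P2 y h : pi h * pi (et y) = pi (h * et y).
Proof.
rewrite -(Fp (et y)).
transitivity (sw2 D (fun a c => pi h * pi a * pi (S c)) (et y * 1)).
  rewrite (T1 (b := fun a c => pi h * pi a * pi (S c))); last by bl.
  by rewrite /sw2 mulr_sumr; apply: eq_bigr => p _; rewrite mulrA.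
transitivity (sw2 D (fun a c => pi (h * a) * pi (S c)) (et y * 1)).
  by rewrite mulr1 (pr2 Hpi).
rewrite (T1 (b := fun a c => pi (h * a) * pi (S c))); last by bl.
by rewrite -(Fp (h * et y)); apply: eq_bigr => p _; rewrite mulrA.
Qed.

Lemma P1 x h : pi (es x) * pi h = pi (es x * h).
Proof.
rewrite -(Fm (es x)).
transitivity (sw2 D (fun a c => pi (S a) * pi c * pi h) (1 * es x)).
  rewrite (T2 (b := fun a c => pi (S a) * pi c * pi h)); last by bl.
  by rewrite /sw2 mulr_suml.
transitivity (sw2 D (fun a c => pi (S a) * pi (c * h)) (1 * es x)).
  by rewrite mul1r (pr5 Hpi).
rewrite (T2 (b := fun a c => pi (S a) * pi (c * h))); last by bl.
by rewrite -(Fm (es x * h)); apply: eq_bigr => p _; rewrite mulrA.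
Qed.

End PR.

End WH.

Unset Implicit Arguments.

Theorem proposition3p4 (k : fieldType) (H : algType k)
    (D : H -> seq (H * H)) (eps : H -> k) (S : H -> H)
    (HW : weak_hopf D eps S)
    (A : algType k) (pi : H -> A) (Hpi : partial_rep D S pi)
    (w z : H) (Hw : exists x, w = eps_s D eps x) (Hz : exists y, z = eps_t D eps y) :
  forall h : H,
    [/\ pi w * pi h = pi (w * h),
        pi h * pi z = pi (h * z),
        pi z * pi h = pi (z * h) &
        pi h * pi w = pi (h * w)].
Proof.
move=> h; case: Hw => x ->; case: Hz => y ->; split.
- exact: (P1 HW Hpi).
- exact: (P2 HW Hpi).
- exact: (P3 HW Hpi).
- exact: (P4 HW Hpi).
Qed.
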